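(* Let $S=K[x_0,x_1,x_2]$. For every integer $1\le d\le 6$, every saturated Borel ideal $I\subset S$ with Hilbert polynomial $p_{S/I}(z)=d$ is a hilb-segment ideal with respect to some term order. For every integer $d\ge7$ there exists a saturated Borel ideal $I\subset S$ with Hilbert polynomial $p_{S/I}(z)=d$ which is not a hilb-segment ideal with respect to any term order.
   Context: $K$ algebraically closed of characteristic $0$, standard grading, $x_0<x_1<x_2$; $\mathbb T_t$ is the set of terms of degree $t$. A monomial ideal is Borel if $x^\alpha\in I$, $\alpha_j>0$, $j<2$ imply $x^\alpha x_{j+1}/x_j\in I$. Given a term order $\preceq$, $B\subseteq\mathbb T_t$ is a segment if $\tau\in B$, $\tau'\in\mathbb T_t$, $\tau'\succ\tau$ imply $\tau'\in B$. A nonzero saturated Borel ideal $I$ is a hilb-segment ideal w.r.t. $\preceq$ if $I\cap\mathbb T_r$ is a segment, where $r$ is the Gotzmann number of the Hilbert polynomial of $S/I$; for a constant Hilbert polynomial $d$ the Gotzmann number is $d$. *)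

(* Defs.v *)
From mathcomp Require Import all_boot.
Set Implicit Arguments. Unset Strict Implicit. Unset Printing Implicit Defensive.

(* Terms of S = K[x0,x1,x2] are identified with exponent triples
   ((a0, a1), a2) standing for x0^a0 x1^a1 x2^a2.  The field K plays no role
   for monomial ideals (K algebraically closed, char 0 is a standing assumption). *)
Definition mon := (nat * nat * nat)%type.

Definition deg (m : mon) : nat := m.1.1 + m.1.2 + m.2.

Definition madd (m n : mon) : mon := (m.1.1 + n.1.1, m.1.2 + n.1.2, m.2 + n.2).

Definition terms (t : nat) : seq mon :=
  flatten [seq [seq (a, b, t - a - b) | b <- iota 0 (t - a).+1] | a <- iota 0 t.+1].

(* A monomial ideal of S, given by the (decidable) set of terms it contains. *)
Definition monomial_ideal (I : pred mon) : Prop :=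
  forall m n, I m -> I (madd m n).

Definition borel (I : pred mon) : Prop :=
  (forall a0 a1 a2, I (a0, a1, a2) -> 0 < a0 -> I (a0.-1, a1.+1, a2)) /\
  (forall a0 a1 a2, I (a0, a1, a2) -> 0 < a1 -> I (a0, a1.-1, a2.+1)).

(* Saturated: I = I : (x0,x1,x2)^infty (for monomial ideals, it suffices to test terms). *)
Definition saturated (I : pred mon) : Prop :=
  forall m, (exists k, forall n, deg n = k -> I (madd m n)) -> I m.

Definition hilb_fun (I : pred mon) (t : nat) : nat :=
  count (fun m => ~~ I m) (terms t).

Definition hilb_poly_const (I : pred mon) (d : nat) : Prop :=
  exists t0, forall t, t0 <= t -> hilb_fun I t = d.

(* Term order on the terms of S: a total order, compatible with multiplication,
   with 1 as minimum.  le m n means m "precedes or equals" n. *)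
Definition term_order (le : mon -> mon -> Prop) : Prop :=
  (forall m, le m m) /\
  (forall m n, le m n -> le n m -> m = n) /\
  (forall m n p, le m n -> le n p -> le m p) /\
  (forall m n, le m n \/ le n m) /\
  (forall m n p, le m n -> le (madd m p) (madd n p)) /\
  (forall m, le (0, 0, 0) m).

Definition segment (le : mon -> mon -> Prop) (t : nat) (B : pred mon) : Prop :=
  forall tau tau', deg tau = t -> deg tau' = t -> B tau -> le tau tau' -> B tau'.

(* Hilb-segment ideal, for an ideal whose Hilbert polynomial is the constant d:
   the Gotzmann number is then r = d, and I /\ T_r must be a segment. *)
Definition hilb_segment_const (I : pred mon) (d : nat) (le : mon -> mon -> Prop) : Prop :=
  [/\ (exists m, I m), saturated I, borel I & segment le d I].

(* Main.v *)
Require Import Defs.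
From mathcomp Require Import all_boot.
From Stdlib Require Import Lia.
Set Implicit Arguments. Unset Strict Implicit. Unset Printing Implicit Defensive.

Ltac tolia :=
  repeat match goal with
  | x : Equality.sort _ |- _ =>
      let y := fresh "y" in pose y : nat := x; change x with y in *; clearbody y; clear x
  end;
  repeat match goal with
  | H : @eq (Equality.sort _) ?a ?b |- _ => change (@eq nat a b) in H
  | |- @eq (Equality.sort _) ?a ?b => change (@eq nat a b)
  end;
  repeat match goal with
  | H : is_true (_ <= _) |- _ => move/leP: H => H
  | H : is_true (_ < _) |- _ => move/ltP: H => H
  | H : is_true (_ == _) |- _ => move/eqP: H => H
  | |- is_true (_ <= _) => apply/leP
  | |- is_true (_ < _) => apply/ltP
  | |- is_true (_ == _) => apply/eqP
  end;
  try change addn with Nat.add in *; try change subn with Nat.sub in *;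
  try change muln with Nat.mul in *; lia.

Definition shift (m : mon) : mon := (m.1.1.+1, m.1.2, m.2).

Lemma terms0 : terms 0 = [:: (0,0,0)]. Proof. by []. Qed.

Lemma map_add1 n m : [seq 1 + x | x <- iota m n] = iota m.+1 n.
Proof. by elim: n m => [|n IH] m //=; rewrite IH. Qed.

Lemma count_termsS (P : pred mon) t :
  count P (terms t.+1) =
  count (fun b => P (0, b, t.+1 - 0 - b)) (iota 0 (t.+1 - 0).+1)
  + count (fun m => P (shift m)) (terms t).
Proof.
have E : iota 0 t.+2 = 0 :: [seq 1 + x | x <- iota 0 t.+1].
  change (iota 0 t.+2) with (0 :: iota 1 t.+1); congr cons.
  by rewrite map_add1.
rewrite {1}/terms {1}E allpairs_cons count_cat count_map; congr (_ + _).
transitivity (count P (map shift (terms t))); last by rewrite count_map.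
congr (count _ _).
rewrite /allpairs_dep map_flatten -!map_comp; congr flatten; apply: eq_map; move=> a.
by rewrite /= -map_comp add1n subSS.
Qed.

Definition row (I : pred mon) k := count (fun b => ~~ I (0, b, k - b)) (iota 0 k.+1).

Lemma hilb_succ (I : pred mon) t : (forall m, I (shift m) = I m) ->
  hilb_fun I t.+1 = row I t.+1 + hilb_fun I t.
Proof.
move=> Hs; rewrite /hilb_fun count_termsS subn0; congr (_ + _).
by apply: eq_count => m; rewrite Hs.
Qed.

Lemma hilb0 (I : pred mon) : hilb_fun I 0 = row I 0.
Proof. by []. Qed.

Lemma madd_comm m n : madd m n = madd n m.
Proof. by case: m => [[a b] c]; case: n => [[a' b'] c']; rewrite /madd /= !(addnC a) !(addnC b) (addnC c). Qed.

Lemma madd_cancel m n p : madd m n = madd m p -> n = p.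
Proof.
case: m => [[a b] c]; case: n => [[a' b'] c']; case: p => [[a'' b''] c''].
rewrite /madd /= => [[H1 H2 H3]].
by move/addnI: H1 => ->; move/addnI: H2 => ->; move/addnI: H3 => ->.
Qed.

Lemma obstruction (le : mon -> mon -> Prop) d (I : pred mon) s1 s2 t1 t2 :
  term_order le -> segment le d I ->
  deg s1 = d -> deg s2 = d -> deg t1 = d -> deg t2 = d ->
  ~~ I s1 -> ~~ I s2 -> I t1 -> I t2 -> madd s1 s2 = madd t1 t2 -> False.
Proof.
move=> [Hr [Ha [Ht [Htot [Hc H0]]]]] Hseg ds1 ds2 dt1 dt2 ns1 ns2 it1 it2 E.
have key : forall s t, deg s = d -> deg t = d -> ~~ I s -> I t -> le s t.
  move=> s t ds dt ns it; case: (Htot s t) => // lts.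
  by move: (Hseg t s dt ds it lts); rewrite (negbTE ns).
have L1 := Hc _ _ s2 (key _ _ ds1 dt1 ns1 it1).
have L2 := Hc _ _ t1 (key _ _ ds2 dt2 ns2 it2).
rewrite E in L1; rewrite (madd_comm t2) (madd_comm s2) in L2.
have := Ha _ _ L1 L2 => /madd_cancel E2.
by move: ns2; rewrite -E2 it2.
Qed.

Definition Ifn (f : nat -> nat) : pred mon := fun m => f m.2 <= m.1.2.

Section Ifn.
Variable f : nat -> nat.
Hypothesis fS : forall c, f c.+1 <= (f c).-1.

Lemma f_anti k c : f (c + k) <= f c.
Proof.
elim: k => [|k IH]; first by rewrite addn0.
rewrite addnS; apply: leq_trans IH; apply: leq_trans (fS _) _; exact: leq_pred.
Qed.

Lemma Ifn_ideal : monomial_ideal (Ifn f).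
Proof.
move=> [[a b] c] [[a' b'] c']; rewrite /Ifn /madd /= => H.
apply: leq_trans (f_anti _ _) _; apply: leq_trans H _; exact: leq_addr.
Qed.

Lemma Ifn_borel : borel (Ifn f).
Proof.
split=> a0 a1 a2; rewrite /Ifn /= => H Hp.
  exact: leq_trans H (leqnSn _).
apply: leq_trans (fS _) _; rewrite -!subn1; tolia.
Qed.

Lemma Ifn_sat : saturated (Ifn f).
Proof.
move=> [[a b] c] [k Hk]; have := Hk (k, 0, 0); rewrite /deg /Ifn /madd /= !addn0.
by apply.
Qed.

Lemma Ifn_shift m : Ifn f (shift m) = Ifn f m.
Proof. by []. Qed.

End Ifn.

Definition f7 (c : nat) := if c == 0 then 4 else if c == 1 then 3 else 0.
Definition f8 (d c : nat) := if c == 0 then d - 3 else 3 - c.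

Lemma f7S c : f7 c.+1 <= (f7 c).-1.
Proof. by case: c => [|[|c]]. Qed.

Lemma f8S d c : 8 <= d -> f8 d c.+1 <= (f8 d c).-1.
Proof.
move=> Hd; case: c => [|c]; rewrite /f8 /=.
  rewrite -subn1; tolia.
by rewrite subnS.
Qed.

Lemma row7 k : 4 <= k -> row (Ifn f7) k = 0.
Proof.
move=> Hk; rewrite /row; transitivity (count pred0 (iota 0 k.+1)); last exact: count_pred0.
apply: eq_in_count; move=> b.
rewrite mem_iota => /andP[_ Hb]; rewrite /Ifn /f7 /=; apply/negbF.
case: eqP => H0; first by tolia.
case: eqP => H1; tolia.
Qed.

Lemma hilb7 t : 3 <= t -> hilb_fun (Ifn f7) t = 7.
Proof.
elim: t => [|t IH] //; rewrite leq_eqVlt => /orP[/eqP <- //|Ht].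
rewrite hilb_succ ?row7 ?IH //.
Qed.

Lemma row8 d k : 8 <= d -> 3 <= k -> row (Ifn (f8 d)) k = (k < d - 3).
Proof.
move=> Hd Hk; rewrite /row -addn1 iotaD count_cat add0n /= subnn /Ifn /= /f8 /= addn0.
rewrite -ltnNge.
rewrite (@eq_in_count nat _ pred0) ?count_pred0 ?add0n ?addn1 //.
move=> b; rewrite mem_iota => /andP[_ Hb]; apply/negbF.
case: eqP => H0; tolia.
Qed.

Lemma hilb8 d n : 8 <= d -> hilb_fun (Ifn (f8 d)) (2 + n) = 3 + minn (3 + n) (d - 3).
Proof.
move=> Hd; elim: n => [|n IH].
  rewrite /hilb_fun /Ifn /f8 /=.
  have h: 5 <= d - 3 by tolia.
  have h0 : (d - 3 <= 0) = false by apply/negbTE; rewrite -ltnNge; tolia.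
  have h1 : (d - 3 <= 1) = false by apply/negbTE; rewrite -ltnNge; tolia.
  have h2 : (d - 3 <= 2) = false by apply/negbTE; rewrite -ltnNge; tolia.
  have h3 : 3 + 0 < d - 3 by tolia.
  by rewrite h0 h1 h2 /minn h3.
rewrite addnS hilb_succ // IH row8 //.
rewrite /minn; case: (ltnP (3 + n) (d - 3)) => H1; case: (ltnP (3 + n.+1) (d - 3)) => H2; case: (ltnP (2 + n).+1 (d - 3)) => H3 /=; tolia.
Qed.

Lemma part2 d : 7 <= d ->
     exists I : pred mon,
       [/\ monomial_ideal I, borel I, saturated I, hilb_poly_const I d &
           forall le : mon -> mon -> Prop, term_order le -> ~ hilb_segment_const I d le].
Proof.
move=> H7; case: (eqVneq d 7) => [->|Hne].
  exists (Ifn f7); split.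
  - exact: (@Ifn_ideal f7 f7S).
  - exact: (@Ifn_borel f7 f7S).
  - exact: Ifn_sat.
  - by exists 3 => t Ht; rewrite hilb7.
  move=> le Hto [_ _ _ Hseg].
  by apply: (obstruction (s1 := (4,2,1)) (s2 := (4,2,1)) (t1 := (3,4,0)) (t2 := (5,0,2)) Hto Hseg).
have Hd : 8 <= d by rewrite ltn_neqAle eq_sym Hne H7.
exists (Ifn (f8 d)); split.
- exact: (@Ifn_ideal (f8 d) (fun c => f8S c Hd)).
- exact: (@Ifn_borel (f8 d) (fun c => f8S c Hd)).
- exact: Ifn_sat.
- exists d => t Ht; have -> : t = 2 + (t - 2) by tolia.
  rewrite hilb8 //; rewrite /minn; case: ltnP => H; tolia.
move=> le Hto [_ _ _ Hseg].
apply: (obstruction (s1 := (d-2,0,2)) (s2 := (4,d-4,0)) (t1 := (d-3,2,1)) (t2 := (5,d-6,1)) Hto Hseg);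
  rewrite /deg /Ifn /f8 /= ?subn0; try tolia.
- by [].
- by rewrite -ltnNge; tolia.
rewrite /madd /=; have -> : d - 2 + 4 = d - 3 + 5 by tolia.
by have -> : 0 + (d - 4) = 2 + (d - 6) by tolia.
Qed.

Definition wt (w : nat * nat) (m : mon) := w.1 * m.1.2 + w.2 * m.2.
Definition lexle (m n : mon) : Prop :=
  lt m.1.1 n.1.1 \/ (m.1.1 = n.1.1 /\ (lt m.1.2 n.1.2 \/ (m.1.2 = n.1.2 /\ le m.2 n.2))).
Definition wle w (m n : mon) : Prop :=
  lt (wt w m) (wt w n) \/ (wt w m = wt w n /\ lexle m n).

Lemma wt_add w m n : wt w (madd m n) = wt w m + wt w n.
Proof.
case: m => [[a b] c]; case: n => [[a' b'] c']; rewrite /wt /madd /= !mulnDr.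
by rewrite -!addnA; congr (_ + _); rewrite addnCA.
Qed.

Lemma wt0 w : wt w (0,0,0) = 0.
Proof. by rewrite /wt /= !muln0. Qed.

Lemma wle_order w : term_order (wle w).
Proof.
split; [|split; [|split; [|split; [|split]]]].
- move=> m; right; split => //; case: m => [[a b] c]; rewrite /lexle /=; tolia.
- move=> [[a b] c] [[a' b'] c']; rewrite /wle /lexle /=.
  move: (wt w (a,b,c)) (wt w (a',b',c')) => x y H1 H2.
  have e1 : a = a' by tolia.
  have e2 : b = b' by tolia.
  have e3 : c = c' by tolia.
  by rewrite e1 e2 e3.
- move=> [[a b] c] [[a' b'] c'] [[a'' b''] c'']; rewrite /wle /lexle /=.
  move: (wt w (a,b,c)) (wt w (a',b',c')) (wt w (a'',b'',c'')) => x y z; tolia.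
- move=> [[a b] c] [[a' b'] c']; rewrite /wle /lexle /=.
  move: (wt w (a,b,c)) (wt w (a',b',c')) => x y; tolia.
- move=> m n p; rewrite /wle !wt_add.
  move: (wt w m) (wt w n) (wt w p) => x y z.
  case: m => [[a b] c]; case: n => [[a' b'] c']; case: p => [[a'' b''] c''].
  rewrite /lexle /madd /=; tolia.
- move=> [[a b] c]; rewrite /wle wt0 /lexle /=.
  move: (wt w (a,b,c)) => x; tolia.
Qed.

Section Abstract.
Variable I : pred mon.
Hypothesis Hid : monomial_ideal I.
Hypothesis Hb : borel I.
Hypothesis Hsat : saturated I.

Lemma move1 a b c x : I (a, b, c) -> x <= a -> I (a - x, b + x, c).
Proof.
move=> H; elim: x => [|x IH] Hx; first by rewrite subn0 addn0.
have := Hb.1 _ _ _ (IH (ltnW Hx)); rewrite subn_gt0 => /(_ Hx).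
by rewrite subnS addnS.
Qed.

Lemma move2 a b c y : I (a, b, c) -> y <= b -> I (a, b - y, c + y).
Proof.
move=> H; elim: y => [|y IH] Hy; first by rewrite subn0 addn0.
have := Hb.2 _ _ _ (IH (ltnW Hy)); rewrite subn_gt0 => /(_ Hy).
by rewrite subnS addnS.
Qed.

Lemma I0 a b c : I (a, b, c) = I (0, b, c).
Proof.
apply/idP/idP => H.
  apply: Hsat; exists a => [[[i j] l]]; rewrite /deg /madd /= => Hdeg.
  have H1 := move1 (x := j + l) H; rewrite -Hdeg in H1.
  have := H1 (ltac:(tolia)).
  have -> : i + j + l - (j + l) = i by rewrite -addnA addnK.
  move=> H2; have := move2 (y := l) H2.
  have -> : b + (j + l) - l = b + j by rewrite addnA addnK.
  by rewrite add0n; apply; tolia.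
have := Hid (a, 0, 0) H; rewrite /madd /= !addn0 add0n; exact.
Qed.

Lemma Ishift m : I (shift m) = I m.
Proof. by case: m => [[a b] c]; rewrite /shift /= I0 (I0 a). Qed.

Lemma revB b c : ~~ I (0, b, c) -> ~~ I (0, b + c, 0).
Proof.
elim: c b => [|c IH] b; first by rewrite addn0.
move=> H; rewrite -addSnnS; apply: IH; apply/negP => H'.
have := Hb.2 _ _ _ H' (ltn0Sn _); rewrite /= (negbTE H) //.
Qed.

Lemma idl_down j k : ~~ I (0, k, 0) -> j <= k -> ~~ I (0, j, 0).
Proof.
move=> H Hj; apply/negP => H'; have := Hid (0, k - j, 0) H'.
by rewrite /madd /= subnKC // (negbTE H).
Qed.

Lemma row_pos j : ~~ I (0, j, 0) -> 0 < row I j.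
Proof.
move=> H; rewrite /row -has_count; apply/hasP; exists j; [by rewrite mem_iota add0n leq0n ltnSn | by rewrite subnn].
Qed.

Lemma hilb_mono t : hilb_fun I t <= hilb_fun I t.+1.
Proof. by rewrite hilb_succ ?leq_addl //; exact: Ishift. Qed.

Lemma hilb_lb k : ~~ I (0, k, 0) -> forall t, minn t k < hilb_fun I t.
Proof.
move=> Hk; elim=> [|t IH].
  by rewrite hilb0 min0n row_pos // (idl_down Hk).
rewrite hilb_succ; last exact: Ishift.
case: (leqP k t) => Hkt.
  rewrite (minn_idPr Hkt) in IH; rewrite (minn_idPr (leqW Hkt)).
  exact: leq_trans IH (leq_addl _ _).
rewrite (minn_idPl (ltnW Hkt)) in IH; rewrite (minn_idPl Hkt).
have := row_pos (idl_down Hk Hkt); move=> ?; tolia.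
Qed.

Variable d : nat.
Hypothesis Hh : hilb_poly_const I d.

Lemma nonmem_bound b c : ~~ I (0, b, c) -> b + c < d.
Proof.
move=> /revB H; case: Hh => t0 Ht0.
have := hilb_lb H (maxn t0 (b + c)); rewrite Ht0 ?leq_maxl //.
by rewrite (minn_idPr (leq_maxr _ _)).
Qed.

Lemma mem_big a b c : d <= b + c -> I (a, b, c).
Proof.
move=> H; rewrite I0; apply/negPn/negP => /nonmem_bound; rewrite ltnNge H //.
Qed.

End Abstract.

Section Part1.
Variable I : pred mon.
Hypothesis Hid : monomial_ideal I.
Hypothesis Hb : borel I.
Hypothesis Hsat : saturated I.
Variable d : nat.
Hypothesis Hh : hilb_poly_const I d.
Hypothesis Hd6 : d <= 6.

Definition F c := find (fun b => I (0, b, c)) (iota 0 7).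

Lemma F_has c : has (fun b => I (0, b, c)) (iota 0 7).
Proof.
apply/hasP; exists 6; first by [].
apply: (mem_big Hid Hb Hsat Hh); apply: leq_trans Hd6 (leq_addr _ _).
Qed.

Lemma F_lt c : F c < 7.
Proof. by rewrite /F -has_find F_has. Qed.

Lemma F_spec a b c : I (a, b, c) = (F c <= b).
Proof.
rewrite (I0 Hid Hb Hsat); case: (leqP (F c) b) => H.
  have := nth_find 0 (F_has c); rewrite -/(F c) nth_iota ?F_lt // add0n => HF.
  by have := Hid (0, b - F c, 0) HF; rewrite /madd /= !addn0 subnKC // => ->.
have Hb7 : b < 7 by exact: ltn_trans H (F_lt c).
by have := before_find 0 H; rewrite nth_iota ?add0n // => /negbTE.
Qed.

Lemma F_S c : F c.+1 <= (F c).-1.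
Proof.
rewrite -(F_spec 0); case: (posnP (F c)) => H.
  have := F_spec 0 0 c; rewrite ?H leqnn => H0.
  by have := Hid (0,0,1) H0; rewrite /madd /= addn1.
have := F_spec 0 (F c) c; rewrite leqnn => H0.
by have := Hb.2 _ _ _ H0 H.
Qed.

Lemma F_big c : 6 <= c -> F c = 0.
Proof.
move=> Hc; apply/eqP; rewrite -leqn0 -(F_spec 0).
apply: (mem_big Hid Hb Hsat Hh); rewrite add0n; exact: leq_trans Hd6 Hc.
Qed.

Definition Fs := [:: F 0; F 1; F 2; F 3; F 4; F 5].

Lemma Fs_nth c : F c = nth 0 Fs c.
Proof.
case: c => [|[|[|[|[|[|c]]]]]] //=.
by rewrite F_big // nth_nil.
Qed.

Lemma hilb5 : hilb_fun I 5 = d.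
Proof.
case: Hh => t0 Ht0.
suff E : forall n, hilb_fun I (5 + n) = hilb_fun I 5.
  by rewrite -(E t0) Ht0 // leq_addl.
elim=> [|n IH]; first by rewrite addn0.
rewrite addnS hilb_succ ?IH; last exact: Ishift.
suff -> : row I (5 + n).+1 = 0 by [].
rewrite /row; transitivity (count pred0 (iota 0 (5 + n).+2)); last exact: count_pred0.
apply: (@eq_in_count nat); move=> b; rewrite mem_iota add0n => Hbb /=.
apply/negbF; apply: (mem_big Hid Hb Hsat Hh).
rewrite subnKC; last by rewrite -ltnS.
apply: leq_trans Hd6 _; rewrite -addSn; exact: leq_addr.
Qed.

End Part1.

Definition good (d : nat) (s : seq nat) (w : nat * nat) : bool :=
  all (fun b => all (fun c => all (fun b' => all (fun c' =>
     [&& b + c <= d, b' + c' <= d, nth 0 s c <= b & b' < nth 0 s c'] ==>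
     (w.1 * b' + w.2 * c' < w.1 * b + w.2 * c)) (iota 0 7)) (iota 0 7)) (iota 0 7)) (iota 0 7).

Definition valid (d : nat) (s : seq nat) : bool :=
  all (fun c => nth 0 s c.+1 <= (nth 0 s c).-1) (iota 0 6) &&
  (count (fun m => ~~ (nth 0 s m.2 <= m.1.2)) (terms 5) == d).

Definition W := [:: (1,1); (1,2); (1,3); (1,4); (1,5); (1,6); (2,3)].

Definition allcheck : bool :=
  all (fun d => all (fun x0 => all (fun x1 => all (fun x2 => all (fun x3 => all (fun x4 =>
  all (fun x5 => let s := [:: x0; x1; x2; x3; x4; x5] in if valid d s then has (good d s) W else true)
  (iota 0 7)) (iota 0 7)) (iota 0 7)) (iota 0 7)) (iota 0 7)) (iota 0 7)) (iota 1 6).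

Lemma allcheck_ok : allcheck.
Proof. vm_compute. reflexivity. Qed.

Lemma iota_mem n k : k < n -> k \in iota 0 n.
Proof. by rewrite mem_iota add0n. Qed.

Lemma part1 d : 1 <= d <= 6 ->
  forall I : pred mon,
    monomial_ideal I -> borel I -> saturated I -> hilb_poly_const I d ->
    exists le : mon -> mon -> Prop, term_order le /\ hilb_segment_const I d le.
Proof.
move=> /andP[Hd1 Hd6] I Hid Hb Hsat Hh.
have Fn := Fs_nth Hid Hb Hsat Hh Hd6.
have Fsp := F_spec Hid Hb Hsat Hh Hd6.
have Hv : valid d (Fs I).
  apply/andP; split.
    apply/allP => c _; have := F_S Hid Hb Hsat Hh Hd6 c; by rewrite !Fn.
  rewrite -(hilb5 Hid Hb Hsat Hh Hd6) /hilb_fun; apply/eqP; apply: eq_count.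
  by move=> [[a b] c] /=; rewrite Fsp Fn.
have := allcheck_ok.
move/allP/(_ d (ltac:(by rewrite mem_iota Hd1 add1n ltnS))).
have Hl := F_lt Hid Hb Hsat Hh Hd6.
move/allP/(_ _ (iota_mem (Hl 0)))/allP/(_ _ (iota_mem (Hl 1)))/allP/(_ _ (iota_mem (Hl 2))).
move/allP/(_ _ (iota_mem (Hl 3)))/allP/(_ _ (iota_mem (Hl 4)))/allP/(_ _ (iota_mem (Hl 5))).
move=> Hall; have : (if valid d (Fs I) then has (good d (Fs I)) W else true) := Hall.
rewrite Hv => /hasP [w _ Hg].
exists (wle w); split; first exact: wle_order.
split => //.
  exists (0, d, 0); apply: (mem_big Hid Hb Hsat Hh); by rewrite /= ?add0n ?addn0.
move=> [[a b] c] [[a' b'] c']; rewrite /deg /= => deg1 deg2 Hin Hle.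
apply/negPn/negP => Hout.
have Hb7 : b < 7 by tolia.
have Hc7 : c < 7 by tolia.
have Hb7' : b' < 7 by tolia.
have Hc7' : c' < 7 by tolia.
move: Hg => /allP/(_ _ (iota_mem Hb7))/allP/(_ _ (iota_mem Hc7)).
move=> /allP/(_ _ (iota_mem Hb7'))/allP/(_ _ (iota_mem Hc7')) /implyP H.
have : w.1 * b' + w.2 * c' < w.1 * b + w.2 * c.
  apply: H; apply/and4P; split; try tolia.
    by rewrite -Fn -(Fsp a).
  by rewrite ltnNge -Fn -(Fsp a').
move: Hle; rewrite /wle /wt /=.
set x := (w.1 * b' + _); set y := (w.1 * b + _); clearbody x y => [[H1|[H1 _]]] H2; tolia.
Qed.

Theorem mainTheorem6 :
  (forall d : nat, 1 <= d <= 6 ->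
     forall I : pred mon,
       monomial_ideal I -> borel I -> saturated I -> hilb_poly_const I d ->
       exists le : mon -> mon -> Prop, term_order le /\ hilb_segment_const I d le)
  /\
  (forall d : nat, 7 <= d ->
     exists I : pred mon,
       [/\ monomial_ideal I, borel I, saturated I, hilb_poly_const I d &
           forall le : mon -> mon -> Prop, term_order le -> ~ hilb_segment_const I d le]).
Proof. split; [exact: part1 | exact: part2]. Qed.
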